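(* Let $(Q,P)$ be a weakly quasi-lattice ordered group and let $\Lambda$ be a $P$-graph. Then: (1) $\mathrm{FA}(\Lambda)$ is a right ideal in $\Lambda$, i.e. if $\lambda\in\mathrm{FA}(\Lambda)$ and $s(\lambda)=r(\lambda')$ then $\lambda\lambda'\in\mathrm{FA}(\Lambda)$; (2) if $\mu\delta\in\mathrm{FA}(\Lambda)$ then $\delta\in\mathrm{FA}(\Lambda)$; (3) $\mathrm{FA}(\Lambda)$ is closed under the source map $s$; (4) $\mathrm{FA}(\Lambda)$ is not necessarily closed under the range map $r$, i.e. there exist such $(Q,P)$ and a $P$-graph $\Lambda$ with $\lambda\in\mathrm{FA}(\Lambda)$ but $r(\lambda)\notin\mathrm{FA}(\Lambda)$; (5) if $\mu\in\mathrm{FA}(\Lambda)$ then $s(\mu)\Lambda\subseteq\mathrm{FA}(\Lambda)$; (6) if $\mu,\nu\in\mathrm{FA}(\Lambda)$ then there is a finite $J\subseteq\mathrm{FA}(\Lambda)$ such that $\mu\Lambda\cap\nu\Lambda=\bigcup_{\lambda\in J}\lambda\Lambda$.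
   Context: $(Q,P)$ weakly quasi-lattice ordered: $Q$ a discrete group, $P\subseteq Q$ a subsemigroup containing the identity $e$ with $P\cap P^{-1}=\{e\}$, and, with $p\le r$ meaning $pq=r$ for some $q\in P$, any two elements of $P$ with a common upper bound have a least common upper bound. A $P$-graph is a countable small category $\Lambda$ (identities $\Lambda^{(0)}$, range/source $r,s$) with a functor $d:\Lambda\to P$ with unique factorisation (if $d(\lambda)=pq$ there are unique $\mu,\nu$ with $\lambda=\mu\nu$, $d(\mu)=p$, $d(\nu)=q$). For $\lambda\in\Lambda$, $\lambda\Lambda=\{\lambda\mu: \mu\in\Lambda, s(\lambda)=r(\mu)\}$. $\Lambda$ is finitely aligned at $(\mu,\nu)$ if there is a finite (possibly empty) $J\subseteq\Lambda$ with $\mu\Lambda\cap\nu\Lambda=\bigcup_{\lambda\in J}\lambda\Lambda$; $\Lambda$ is finitely aligned at $\lambda$ if it is finitely aligned at $(\mu,\nu)$ for every $\mu\in\lambda\Lambda$ and $\nu\in\Lambda$; $\mathrm{FA}(\Lambda)$ is the set of $\lambda\in\Lambda$ at which $\Lambda$ is finitely aligned. *)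

(* Defs.v *)
From Stdlib Require Import List.
Import ListNotations.
Set Implicit Arguments.
Unset Strict Implicit.

Record Group : Type := {
  gcar :> Type;
  gmul : gcar -> gcar -> gcar;
  gone : gcar;
  ginv : gcar -> gcar;
  gmulA : forall x y z, gmul x (gmul y z) = gmul (gmul x y) z;
  gmul1l : forall x, gmul gone x = x;
  gmul1r : forall x, gmul x gone = x;
  gmulVl : forall x, gmul (ginv x) x = gone;
  gmulVr : forall x, gmul x (ginv x) = gone
}.

Section WQLO.
Variables (Q : Group) (P : Q -> Prop).

Definition ple (p r : Q) : Prop := exists q, P q /\ gmul p q = r.

Definition WQLO : Prop :=
  (forall p q, P p -> P q -> P (gmul p q)) /\
  P (@gone Q) /\
  (forall x, P x -> P (ginv x) -> x = @gone Q) /\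
  (forall p q, P p -> P q ->
     (exists u, P u /\ ple p u /\ ple q u) ->
     exists l, P l /\ ple p l /\ ple q l /\
       (forall u, P u -> ple p u -> ple q u -> ple l u)).
End WQLO.

(** A P-graph: a countable small category (given by its morphisms; the
    objects are identified with the identity morphisms, i.e. the values of
    r and s), with a degree functor d : Λ -> P having unique factorisation.
    [comp x y] is the composite xy; it is only meaningful when s x = r y. *)
Record PGraph (Q : Group) (P : Q -> Prop) : Type := {
  pcar :> Type;
  pr : pcar -> pcar;
  ps : pcar -> pcar;
  comp : pcar -> pcar -> pcar;
  deg : pcar -> Q;
  pcount : exists f : pcar -> nat, forall x y, f x = f y -> x = y;
  pr_r : forall x, pr (pr x) = pr x;
  ps_r : forall x, ps (pr x) = pr x;
  pr_s : forall x, pr (ps x) = ps x;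
  ps_s : forall x, ps (ps x) = ps x;
  comp_r : forall x y, ps x = pr y -> pr (comp x y) = pr x;
  comp_s : forall x y, ps x = pr y -> ps (comp x y) = ps y;
  compA : forall x y z, ps x = pr y -> ps y = pr z ->
            comp x (comp y z) = comp (comp x y) z;
  comp1l : forall x, comp (pr x) x = x;
  comp1r : forall x, comp x (ps x) = x;
  deg_P : forall x, P (deg x);
  deg_id : forall x, deg (pr x) = @gone Q;
  deg_comp : forall x y, ps x = pr y -> deg (comp x y) = gmul (deg x) (deg y);
  fact_ex : forall x p q, P p -> P q -> deg x = gmul p q ->
    exists m n, ps m = pr n /\ x = comp m n /\ deg m = p /\ deg n = q;
  fact_uniq : forall x p q m n m' n', P p -> P q ->
    ps m = pr n -> x = comp m n -> deg m = p -> deg n = q ->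
    ps m' = pr n' -> x = comp m' n' -> deg m' = p -> deg n' = q ->
    m = m' /\ n = n'
}.

Section FA.
Variables (Q : Group) (P : Q -> Prop) (L : PGraph P).

Definition inRight (l x : L) : Prop :=
  exists a : L, ps l = pr a /\ x = comp l a.

Definition fin_aligned_at (m n : L) : Prop :=
  exists J : list L, forall x,
    (inRight m x /\ inRight n x) <-> (exists l, In l J /\ inRight l x).

Definition FA (l : L) : Prop :=
  forall m, inRight l m -> forall n : L, fin_aligned_at m n.
End FA.

(* Main.v *)
Require Import Defs.
From Stdlib Require Import List Classical ZArith Lia.
Import ListNotations.
Set Implicit Arguments.

Section Gen.
Variables (Q : Group) (P : Q -> Prop) (L : PGraph P).

Lemma gcancel (g x y : Q) : gmul g x = gmul g y -> x = y.
Proof.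
  intro H. rewrite <- (gmul1l x), <- (gmul1l y), <- (gmulVl g), <- !gmulA, H. reflexivity.
Qed.

Lemma lcancel (m y y' : L) : ps m = pr y -> ps m = pr y' -> comp m y = comp m y' -> y = y'.
Proof.
  intros H1 H2 H.
  assert (Hd : deg y = deg y').
  { apply (gcancel (deg m)). rewrite <- !deg_comp by assumption. now rewrite H. }
  destruct (@fact_uniq _ _ _ (comp m y) _ _ _ _ _ _ (deg_P m) (deg_P y) H1 eq_refl eq_refl eq_refl
     H2 H eq_refl (eq_sym Hd)) as [_ E]. exact E.
Qed.

Lemma inRight_self (l : L) : inRight l l.
Proof. exists (ps l). split. symmetry; apply pr_s. symmetry; apply comp1r. Qed.

Lemma inRight_trans (l x y : L) : inRight l x -> inRight x y -> inRight l y.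
Proof.
  intros [a [Ha ->]] [b [Hb ->]].
  rewrite comp_s in Hb by assumption.
  exists (comp a b). split.
  - rewrite comp_r; assumption.
  - symmetry; apply compA; assumption.
Qed.

Lemma inRight_r (l x : L) : inRight l x -> pr x = pr l.
Proof. intros [a [Ha ->]]. apply comp_r; assumption. Qed.

Lemma push (m z x : L) : ps m = pr z -> inRight z x -> inRight (comp m z) (comp m x).
Proof.
  intros H [c [Hc ->]]. exists c. split.
  - rewrite comp_s; assumption.
  - apply compA; assumption.
Qed.

Lemma strip (m z x : L) : ps m = pr z -> ps m = pr x ->
  inRight (comp m z) (comp m x) -> inRight z x.
Proof.
  intros H1 H2 [c [Hc E]]. rewrite comp_s in Hc by assumption.
  rewrite <- compA in E by assumption.
  exists c. split; [assumption|].
  apply (lcancel m); [assumption| |assumption].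
  rewrite comp_r; assumption.
Qed.

Lemma lift_list {A B : Type} (R : A -> B -> Prop) (J' : list A) :
  (forall l, In l J' -> exists y, R l y) ->
  exists J, (forall y, In y J -> exists l, In l J' /\ R l y) /\
            (forall l, In l J' -> exists y, In y J /\ R l y).
Proof.
  induction J' as [|a J' IH]; intros H.
  - exists []. split; intros ? [].
  - destruct IH as [J [H1 H2]]. { intros; apply H; now right. }
    destruct (H a (or_introl eq_refl)) as [ya Ha].
    exists (ya :: J). split.
    + intros y [<-|Hy]. exists a; split; [now left|assumption].
      destruct (H1 y Hy) as [l [? ?]]. exists l; split; [now right|assumption].
    + intros l [<-|Hl]. exists ya; split; [now left|assumption].
      destruct (H2 l Hl) as [y [? ?]]. exists y; split; [now right|assumption].
Qed.

Lemma part1 : forall l l' : L, FA l -> ps l = pr l' -> FA (comp l l').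
Proof.
  intros l l' Hl E x Hx n. apply Hl.
  eapply inRight_trans; [|exact Hx]. exists l'; split; auto.
Qed.

Lemma part2 : forall m d : L, ps m = pr d -> FA (comp m d) -> FA d.
Proof.
  intros m d Hmd HF x Hx n.
  assert (Hxm : pr x = ps m) by (rewrite (inRight_r Hx); auto).
  destruct (classic (pr n = ps m)) as [Hn|Hn].
  - assert (Hc : inRight (comp m d) (comp m x)).
    { destruct Hx as [a [Ha ->]]. exists a. split.
      rewrite comp_s; auto. apply compA; auto. }
    destruct (HF _ Hc (comp m n)) as [J' HJ'].
    destruct (lift_list (fun l y => ps m = pr y /\ l = comp m y) J') as [J [HJ1 HJ2]].
    { intros l Hl. assert (Hl2 : inRight (comp m x) l).
      { apply (proj1 (proj2 (HJ' l) (ex_intro _ l (conj Hl (inRight_self l))))). }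
      assert (Hl3 : inRight m l).
      { eapply inRight_trans; [|exact Hl2]. exists x; split; auto. }
      destruct Hl3 as [y [Hy ->]]. exists y; auto. }
    exists J. intros x'. split.
    + intros [H1 H2].
      assert (Hx' : pr x' = ps m) by (rewrite (inRight_r H1); auto).
      destruct (proj1 (HJ' (comp m x')) (conj (push m (eq_sym Hxm) H1) (push m (eq_sym Hn) H2)))
        as [l [Hl Hl']].
      destruct (HJ2 l Hl) as [y [Hy [Hy1 ->]]].
      exists y; split; auto. apply (strip m); auto.
    + intros [y [Hy Hyx]].
      destruct (HJ1 y Hy) as [l [Hl [Hy1 ->]]].
      assert (Hx' : pr x' = ps m) by (rewrite (inRight_r Hyx); auto).
      destruct (proj2 (HJ' (comp m x')) (ex_intro _ _ (conj Hl (push m Hy1 Hyx)))) as [H1 H2].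
      split; apply (strip m); auto.
  - exists []. intros x'. split.
    + intros [H1 H2]. exfalso. apply Hn.
      rewrite <- (inRight_r H2), (inRight_r H1). auto.
    + intros [l [[] _]].
Qed.

Lemma part3 : forall l : L, FA l -> FA (ps l).
Proof.
  intros l Hl. apply (part2 l). symmetry; apply pr_s. rewrite comp1r. exact Hl.
Qed.

Lemma part5 : forall m : L, FA m -> forall x : L, inRight (ps m) x -> FA x.
Proof.
  intros m Hm x [a [Ha ->]]. rewrite ps_s in Ha. rewrite Ha, comp1l.
  apply (part2 m); auto. apply part1; auto.
Qed.

Lemma part6 : forall m n : L, FA m -> FA n ->
        exists J : list L, (forall l, In l J -> FA l) /\
          (forall x, (inRight m x /\ inRight n x) <->
                     (exists l, In l J /\ inRight l x)).
Proof.
  intros m n Hm Hn. destruct (Hm m (inRight_self m) n) as [J HJ].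
  exists J. split; auto.
  intros l Hl. destruct (proj2 (HJ l) (ex_intro _ l (conj Hl (inRight_self l)))) as [[a [Ha ->]] _].
  apply part1; auto.
Qed.
End Gen.

Definition Z2 := (Z * Z)%type.
Definition zmul (x y : Z2) : Z2 := (fst x + fst y, snd x + snd y)%Z.
Definition zinv (x : Z2) : Z2 := (- fst x, - snd x)%Z.

Program Definition QZ : Group := {| gcar := Z2; gmul := zmul; gone := (0,0)%Z; ginv := zinv |}.
Next Obligation. unfold zmul; simpl; f_equal; lia. Qed.
Next Obligation. destruct x; unfold zmul; simpl; f_equal. Qed.
Next Obligation. destruct x; unfold zmul; simpl; f_equal; lia. Qed.
Next Obligation. unfold zmul; simpl; f_equal; lia. Qed.
Next Obligation. unfold zmul; simpl; f_equal; lia. Qed.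

Definition PZ (x : QZ) : Prop := (0 <= fst x /\ 0 <= snd x)%Z.

Lemma ple_iff (p r : QZ) : ple PZ p r <-> (fst p <= fst r /\ snd p <= snd r)%Z.
Proof.
  unfold ple, PZ; split.
  - intros [q [[H1 H2] <-]]. simpl. unfold zmul; simpl. lia.
  - intros [H1 H2]. exists (fst r - fst p, snd r - snd p)%Z. simpl. split. lia.
    unfold zmul; destruct r; simpl; f_equal; lia.
Qed.

Lemma wqlo : WQLO PZ.
Proof.
  unfold WQLO, PZ. split; [|split; [|split]].
  - intros p q; simpl; unfold zmul; simpl; lia.
  - simpl; lia.
  - intros [a b]; simpl; unfold zinv; simpl; intros. assert (a = 0%Z) by lia; assert (b = 0%Z) by lia; subst; reflexivity.
  - intros [p1 p2] [q1 q2] Hp Hq _. exists (Z.max p1 q1, Z.max p2 q2)%Z.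
    rewrite !ple_iff. simpl in *. split; [lia|]. split; [lia|]. split; [lia|].
    intros [u1 u2] _. rewrite !ple_iff. simpl. lia.
Qed.

Inductive T := V | A | B | C | Mu | Nu | Al (i : nat) | Be (i : nat) | La (i : nat).

Definition tr (x : T) : T := match x with
  | V | Mu | Nu | La _ => V | A | Al _ => A | B | Be _ => B | C => C end.
Definition ts (x : T) : T := match x with
  | V => V | A | Mu => A | B | Nu => B | C | Al _ | Be _ | La _ => C end.
Definition tcomp (x y : T) : T := match x, y with
  | _, (V|A|B|C) => x
  | (V|A|B|C), _ => y
  | Mu, Al i => La i
  | Nu, Be i => La i
  | _, _ => x end.
Definition tdeg (x : T) : QZ := match x with
  | V | A | B | C => (0,0)%Z
  | Mu | Be _ => (1,0)%Z
  | Nu | Al _ => (0,1)%Z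
  | La _ => (1,1)%Z end.
Definition enc (x : T) : nat := match x with
  | V => 0 | A => 1 | B => 2 | C => 3 | Mu => 4 | Nu => 5
  | Al i => 6 + 3 * i | Be i => 7 + 3 * i | La i => 8 + 3 * i end.

Lemma enc_inj : exists f : T -> nat, forall x y, f x = f y -> x = y.
Proof. exists enc. intros [] []; simpl; intros H; try reflexivity; try (f_equal; lia); try lia. Qed.

Ltac fin := simpl; split; [reflexivity|split; [reflexivity|split; f_equal; lia]].

Lemma fex : forall (x : T) (p q : QZ), PZ p -> PZ q -> tdeg x = zmul p q ->
  exists m n, ts m = tr n /\ x = tcomp m n /\ tdeg m = p /\ tdeg n = q.
Proof.
  intros x [p1 p2] [q1 q2]; unfold PZ, zmul; simpl; intros Hp Hq E.
  destruct x; simpl in E; injection E; intros E2 E1.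
  all: destruct (Z.eq_dec p1 0), (Z.eq_dec p2 0).
  all: first [ exists V, V; fin | exists A, A; fin | exists B, B; fin | exists C, C; fin
   | exists V, Mu; fin | exists Mu, A; fin | exists V, Nu; fin | exists Nu, B; fin
   | exists A, (Al i); fin | exists (Al i), C; fin | exists B, (Be i); fin | exists (Be i), C; fin
   | exists V, (La i); fin | exists (La i), C; fin | exists Mu, (Al i); fin | exists Nu, (Be i); fin ].
Qed.

Lemma funiq : forall (x : T) (p q : QZ) (m n m' n' : T), PZ p -> PZ q ->
    ts m = tr n -> x = tcomp m n -> tdeg m = p -> tdeg n = q ->
    ts m' = tr n' -> x = tcomp m' n' -> tdeg m' = p -> tdeg n' = q ->
    m = m' /\ n = n'.
Proof.
  intros x p q m n m' n' _ _ H1 Hx Hp Hq H1' Hx' Hp' Hq'. subst x p q.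
  destruct m, n; simpl in H1; try discriminate;
  destruct m', n'; simpl in H1'; try discriminate; simpl in *;
  split; congruence.
Qed.

Definition LG : PGraph PZ.
Proof.
  refine {| pcar := T; pr := tr; ps := ts; comp := tcomp; deg := tdeg;
            pcount := enc_inj; fact_ex := fex; fact_uniq := funiq |}.
  all: try (intros []; reflexivity).
  all: try (intros [] []; simpl; try discriminate; reflexivity).
  all: try (intros [] [] []; simpl; try discriminate; reflexivity).
  all: try (intros []; simpl; unfold PZ; simpl; lia).
  all: try (intros [] []; simpl; try discriminate; intros _; unfold zmul; simpl; reflexivity).
Defined.

Lemma onlyLa (i : nat) (x : LG) : @inRight _ _ LG (La i) x -> x = La i.
Proof. intros [a [Ha ->]]. destruct a; simpl in *; try discriminate; reflexivity. Qed.

Lemma selfT (l : LG) : inRight l l.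
Proof. exists (ts l). destruct l; split; reflexivity. Qed.

Lemma MuNu (x : LG) : @inRight _ _ LG Mu x -> @inRight _ _ LG Nu x -> exists j, x = La j.
Proof.
  intros [a [Ha Ea]] [b [Hb Eb]].
  destruct a; simpl in *; try discriminate; destruct b; simpl in *; try discriminate;
  subst; try discriminate; eauto.
Qed.

Definition gidx (x : T) : nat := match x with La i => i | _ => 0 end.

Lemma in_le (x : T) (J : list T) : In x J -> gidx x <= list_sum (map gidx J).
Proof.
  induction J as [|a J IH]; simpl. intros []. intros [<-|H]. lia. specialize (IH H). lia.
Qed.

Lemma part4 : exists (Q : Group) (P : Q -> Prop), WQLO P /\
     exists (L : PGraph P) (l : L), FA l /\ ~ FA (pr l).
Proof.
  exists QZ, PZ. split. exact wqlo. exists LG, (La 0). split.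
  - intros m Hm n. apply onlyLa in Hm. subst m.
    destruct (classic (inRight n (La 0 : LG))) as [Hn|Hn].
    + exists [La 0]. intros x. split.
      * intros [H1 _]. apply onlyLa in H1. subst. exists (La 0). split. now left. apply selfT.
      * intros [l [[<-|[]] H]]. apply onlyLa in H. subst. split. apply selfT. exact Hn.
    + exists []. intros x. split.
      * intros [H1 H2]. apply onlyLa in H1. subst. contradiction.
      * intros [l [[] _]].
  - simpl. intros HF.
    assert (HM : @inRight _ _ LG V Mu) by (exists Mu; split; reflexivity).
    destruct (HF Mu HM Nu) as [J HJ].
    assert (All : forall i, In (La i) J).
    { intros i. destruct (proj1 (HJ (La i))) as [l [Hl Hli]].
      { split; [exists (Al i)|exists (Be i)]; split; reflexivity. }
      destruct (proj2 (HJ l) (ex_intro _ l (conj Hl (selfT l)))) as [H1 H2].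
      destruct (MuNu H1 H2) as [j ->].
      apply onlyLa in Hli. rewrite Hli. exact Hl. }
    pose proof (in_le _ _ (All (S (list_sum (map gidx J))))). simpl in *. lia.
Qed.

Theorem lemma3p5 :
  (forall (Q : Group) (P : Q -> Prop), WQLO P -> forall L : PGraph P,
     (* (1) right ideal *)
     (forall l l' : L, FA l -> ps l = pr l' -> FA (comp l l')) /\
     (* (2) *)
     (forall m d : L, ps m = pr d -> FA (comp m d) -> FA d) /\
     (* (3) closed under s *)
     (forall l : L, FA l -> FA (ps l)) /\
     (* (5) s(μ)Λ ⊆ FA(Λ) *)
     (forall m : L, FA m -> forall x : L, inRight (ps m) x -> FA x) /\
     (* (6) *)
     (forall m n : L, FA m -> FA n ->
        exists J : list L, (forall l, In l J -> FA l) /\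
          (forall x, (inRight m x /\ inRight n x) <->
                     (exists l, In l J /\ inRight l x)))) /\
  (* (4) FA(Λ) need not be closed under r *)
  (exists (Q : Group) (P : Q -> Prop), WQLO P /\
     exists (L : PGraph P) (l : L), FA l /\ ~ FA (pr l)).
Proof.
  split.
  - intros Q P _ L. split; [apply part1|split; [apply part2|split; [apply part3|split; [apply part5|apply part6]]]].
  - exact part4.
Qed.
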